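(* Let $F$ be any field, $N\in\mathbb{N}$, and $p,p'\in\mathbb{N}$ with $p+p'\le N+1$. If $x\in F^{N+1}$ satisfies $\operatorname{rank}(H_{p,p'-1}(x))\le p$ and $\operatorname{rank}(H_{p-1,p'}(x))\le p'$, then $\operatorname{rank}(H_{p,p'-1}(x))=\operatorname{rank}(H_{p-1,p'}(x))$.
   Context: $\mathbb{N}=\{0,1,2,\ldots\}$. For $N\in\mathbb{N}$, $x=(x_0,\ldots,x_N)\in F^{N+1}$ and integers $s,t\ge -1$ with $s+t\le N$, the Hankel matrix $H_{s,t}(x)$ is the $(s+1)\times(t+1)$ matrix $(x_{i+j})_{0\le i\le s,\,0\le j\le t}$ (a matrix with zero rows or columns has rank $0$). *)

(* Defs.v *)
From mathcomp Require Import all_boot all_order all_algebra.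
Set Implicit Arguments. Unset Strict Implicit. Unset Printing Implicit Defensive.
Import GRing.Theory.
Local Open Scope ring_scope.

(* Hankel matrix with r = s+1 rows and c = t+1 columns built from
   x = (x_0, ..., x_N) : 'rV[F]_(N.+1), entry (i,j) = x_(i+j).
   The index i+j is only meaningful when r + c <= N + 2 (i.e. s + t <= N),
   which is always the case where it is used; out-of-range indices are
   sent via inord (never occurs under the hypotheses). *)
Definition hankel (F : fieldType) (N r c : nat) (x : 'rV[F]_(N.+1)) : 'M[F]_(r, c) :=
  \matrix_(i < r, j < c) x 0 (inord (i + j)).

(* Main.v *)
Require Import Defs.
From mathcomp Require Import all_boot all_order all_algebra.
From mathcomp Require Import zify.
Set Implicit Arguments. Unset Strict Implicit. Unset Printing Implicit Defensive.
Import GRing.Theory.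

Section H.
Variables (F : fieldType) (N : nat) (x : 'rV[F]_(N.+1)).
Local Open Scope ring_scope.

Lemma hankel_tr r c : (hankel r c x)^T = hankel c r x.
Proof. by apply/matrixP => i j; rewrite !mxE addnC. Qed.

Lemma hankel_sub r c : (hankel r c x <= hankel r.+1 c x)%MS.
Proof.
apply/row_subP => i; rewrite (_ : row i _ = row (widen_ord (leqnSn r) i) (hankel r.+1 c x)).
  exact: row_sub.
by apply/rowP => j; rewrite !mxE.
Qed.

Lemma hankel_le1 r c : (\rank (hankel r.+1 c x) <= \rank (hankel r c x) + 1)%N.
Proof.
set r0 := row (@ord_max r) (hankel r.+1 c x).
have : (hankel r.+1 c x <= hankel r c x + r0)%MS.
  apply/row_subP => i; case: (ltnP i r) => hi.
    apply: submx_trans (addsmxSl _ _).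
    rewrite (_ : row i _ = row (Ordinal hi) (hankel r c x)); first exact: row_sub.
    by apply/rowP => j; rewrite !mxE.
  apply: submx_trans (addsmxSr _ _).
  have -> : i = ord_max by apply/val_inj => /=; move: (ltn_ord i); lia.
  exact: submx_refl.
move/mxrankS => h; apply: leq_trans h _.
have [h _] := mxrank_adds_leqif (hankel r c x) r0.
apply: leq_trans h _; rewrite leq_add2l; exact: rank_leq_row.
Qed.

Lemma key p p' : (\rank (hankel p.+1 p' x) <= p)%N ->
  \rank (hankel p p'.+1 x) = \rank (hankel p p' x) ->
  \rank (hankel p.+1 p' x) = \rank (hankel p p' x).
Proof.
set A := hankel p.+1 p' x; set B := hankel p p'.+1 x; set C := hankel p p' x.
move=> hA hBC.
have CBt : (C^T <= B^T)%MS.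
  apply/row_subP => j; rewrite (_ : row j _ = row (widen_ord (leqnSn p') j) B^T).
    exact: row_sub.
  by apply/rowP => i; rewrite !mxE.
have BtC : (B^T <= C^T)%MS.
  have [_ H] := mxrank_leqif_sup CBt.
  by rewrite -H !mxrank_tr hBC.
have [D hD] : exists D : 'rV_p', row ord_max B^T = D *m C^T.
  by apply/submxP; exact: submx_trans (row_sub _ _) BtC.
have hrel : forall i : 'I_p, x 0 (inord (i + p')) = \sum_j D 0 j * x 0 (inord (i + j)).
  move=> i; have := congr1 (fun M : 'M[F]_(1,p) => M 0 i) hD; rewrite !mxE /= => ->.
  by apply: eq_bigr => j _; rewrite !mxE.
pose K : 'M[F]_p' := \matrix_(j, k) (if (k.+1 < p')%N then (j == k.+1 :> nat)%:R else D 0 j).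
have hK : forall i : 'I_p.+1, (i < p)%N -> row i A *m K = row (inord i.+1) A.
  move=> i hi; apply/rowP => k; rewrite /A /K !mxE.
  rewrite inordK ?ltnS //.
  case hk : (k.+1 < p')%N; under eq_bigr => j _ do rewrite !mxE hk.
    rewrite (bigD1 (Ordinal hk)) //= eqxx mulr1 big1 ?addr0.
      by rewrite addnS addSn.
    move=> j hj.
    case: eqP => [hjk|]; last by rewrite mulr0.
    by move: hj; rewrite -(inj_eq val_inj) /= hjk eqxx.
  have hk' : k.+1 = p' by move: (ltn_ord k) hk; lia.
  rewrite (eq_bigr (fun j => D 0 j * x 0 (inord (Ordinal hi + j)))); last first.
    by move=> j _; rewrite mulrC.
  by rewrite -hrel /= addSn -addnS hk'.
have [a [a0 aA]] : exists a : 'rV[F]_p.+1, a != 0 /\ a *m A = 0.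
  have : kermx A != 0.
    rewrite kermx_eq0 /row_free; apply/negP => /eqP h; move: hA; rewrite h; lia.
  case: (pickP (fun i => row i (kermx A) != 0)) => [i hi _|hn].
    exists (row i (kermx A)); split => //; apply/sub_kermxP; exact: row_sub.
  case/negP; apply/eqP/row_matrixP => i; rewrite row0; apply/eqP.
  by move: (hn i) => /= /negbFE.
have [i0 hi0] : exists i0, a 0 i0 != 0.
  case: (pickP (fun i => a 0 i != 0)) => [i hi|hn]; first by exists i.
  case/negP: a0; apply/eqP/rowP => i; rewrite mxE; apply/eqP.
  by move: (hn i) => /= /negbFE.
case: (@arg_maxnP _ i0 (fun i => a 0 i != 0) (fun i : 'I_p.+1 => val i) hi0) => m am0 mmax.
have mp : (m <= p)%N by move: (ltn_ord m); lia.
pose V : 'M[F]_(p.+1, p') := \matrix_(i, j) (if (i < m)%N then A i j else 0).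
have rowV : forall i : 'I_p.+1, (i < m)%N -> row i V = row i A.
  by move=> i hi; apply/rowP => j; rewrite !mxE hi.
have rowV0 : forall i : 'I_p.+1, ~~ (i < m)%N -> row i V = 0.
  by move=> i hi; apply/rowP => j; rewrite !mxE (negbTE hi).
have hVC : (V <= C)%MS.
  apply/row_subP => i; case: (boolP (i < m)%N) => hi; last by rewrite rowV0 // sub0mx.
  have hip : (i < p)%N by lia.
  rewrite rowV // (_ : row i A = row (Ordinal hip) C); first exact: row_sub.
  by apply/rowP => j; rewrite !mxE.
have hsplit : a *m A = a *m V + a 0 m *: row m A.
  rewrite !mulmx_sum_row (bigD1 m) //= [X in _ = X + _](bigD1 m) //=.
  rewrite rowV0 ?ltnn // scaler0 add0r addrC; congr (_ + _).
  apply: eq_bigr => i hi; case: (boolP (i < m)%N) => him; first by rewrite rowV.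
  have : a 0 i == 0.
    apply/negPn/negP => /mmax; move: him hi; rewrite -(inj_eq val_inj) /=; lia.
  by move/eqP ->; rewrite !scale0r.
have hrm : (row m A <= V)%MS.
  have hm : row m A = (a 0 m)^-1 *: ((- a) *m V).
    rewrite mulNmx -[a *m V]addr0 -(subrr (a 0 m *: row m A)) addrA -hsplit aA add0r.
    by rewrite opprK scalerA mulVf // scale1r.
  by rewrite hm scalemx_sub // submxMl.
have hVK : (V *m K <= V)%MS.
  apply/row_subP => i; rewrite row_mul; case: (boolP (i < m)%N) => hi; last first.
    by rewrite rowV0 // mul0mx sub0mx.
  rewrite rowV // hK; last by lia.
  case: (boolP (i.+1 < m)%N) => hi1.
    rewrite -rowV; first exact: row_sub.
    by rewrite inordK //; lia.
  have -> : (inord i.+1 : 'I_p.+1) = m.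
    apply/val_inj; rewrite /= inordK; lia.
  exact: hrm.
have hall : forall k, (m + k < p.+1)%N -> (row (inord (m + k)) A <= V)%MS.
  elim=> [|k IH] hk.
    by rewrite addn0 inord_val.
  have hk' : (m + k < p.+1)%N by lia.
  rewrite (_ : inord (m + k.+1) = inord (inord (m + k) : 'I_p.+1).+1); last first.
    by rewrite inordK // addnS.
  rewrite -hK; last by rewrite inordK //; lia.
  exact: submx_trans (submxMr _ (IH hk')) hVK.
have hAV : (A <= V)%MS.
  apply/row_subP => i; case: (boolP (i < m)%N) => hi.
    by rewrite -rowV //; exact: row_sub.
  have := hall (i - m)%N; rewrite subnKC; last by lia.
  by rewrite inord_val; apply; exact: ltn_ord.
have hAC := submx_trans hAV hVC.
apply/eqP; rewrite eqn_leq mxrankS //=.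
apply: mxrankS; exact: hankel_sub.
Qed.
End H.

Theorem lemma8 (F : fieldType) (N p p' : nat) (x : 'rV[F]_(N.+1)) :
  (p + p' <= N.+1)%N ->
  (\rank (hankel p.+1 p' x) <= p)%N ->
  (\rank (hankel p p'.+1 x) <= p')%N ->
  \rank (hankel p.+1 p' x) = \rank (hankel p p'.+1 x).
Proof.
move=> _ hA hB.
have k1 := key hA.
have hB' : (\rank (hankel p'.+1 p x) <= p')%N by rewrite -(hankel_tr x p p'.+1) mxrank_tr.
have k2 := key hB'.
rewrite -(hankel_tr x p.+1 p') -(hankel_tr x p p'.+1) -(hankel_tr x p p') !mxrank_tr in k2.
have a1 := hankel_le1 x p p'.
have a2 := hankel_le1 x p' p.
rewrite -(hankel_tr x p p'.+1) -(hankel_tr x p p') !mxrank_tr in a2.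
have b1 := mxrankS (hankel_sub x p p').
have b2 := mxrankS (hankel_sub x p' p).
rewrite -(hankel_tr x p p'.+1) -(hankel_tr x p p') !mxrank_tr in b2.
case: (eqVneq (\rank (hankel p p'.+1 x)) (\rank (hankel p p' x))) => e.
  by rewrite k1 // e.
have e2 : \rank (hankel p.+1 p' x) != \rank (hankel p p' x).
  by apply/eqP => /k2 /eqP; rewrite (negbTE e).
move: e e2 a1 a2 b1 b2.
set u := \rank (hankel p.+1 p' x); set v := \rank (hankel p p'.+1 x);
set w := \rank (hankel p p' x) => e e2 a1 a2 b1 b2.
apply/eqP; rewrite eqn_leq; apply/andP; split.
  by rewrite (leq_trans a1) // addn1 ltn_neqAle eq_sym e b2.
by rewrite (leq_trans a2) // addn1 ltn_neqAle eq_sym e2 b1.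
Qed.
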